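(* Let $A$ be a prime ring which satisfies the ascending chain condition on prime ideals (every ascending chain of prime ideals of $A$ stabilizes). Then $A$ is Hopfian.
   Context: A ring $A$ is \emph{Hopfian} if $A$ is not isomorphic (as a ring) to $A/J$ for any nonzero two-sided ideal $J \triangleleft A$. *)

(* Defs.v *)
From HB Require Import structures.
From mathcomp Require Import all_boot all_order all_algebra.
From Stdlib Require Import ClassicalEpsilon.
Set Implicit Arguments. Unset Strict Implicit. Unset Printing Implicit Defensive.
Import GRing.Theory.
Local Open Scope ring_scope.

Definition ideal2 (A : nzRingType) (J : A -> Prop) : Prop :=
  [/\ J 0,
      (forall x y, J x -> J y -> J (x - y)),
      (forall a x, J x -> J (a * x)) &
      (forall a x, J x -> J (x * a))].

Definition prime_ideal (A : nzRingType) (P : A -> Prop) : Prop :=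
  [/\ ideal2 P, ~ P 1 &
      forall a b, (forall r, P (a * r * b)) -> P a \/ P b].

Definition prime_ring (A : nzRingType) : Prop :=
  prime_ideal (fun x : A => x = 0).

Definition acc_prime (A : nzRingType) : Prop :=
  forall P : nat -> A -> Prop,
    (forall n, prime_ideal (P n)) ->
    (forall n x, P n x -> P n.+1 x) ->
    exists N, forall n, (N <= n)%N -> forall x, P n x <-> P N x.

Definition coset (A : nzRingType) (J : A -> Prop) (a : A) : A -> Prop :=
  fun x => J (x - a).

Definition quot (A : nzRingType) (J : A -> Prop) : Type :=
  {C : A -> Prop | exists a, C = coset J a}.

Definition qclass (A : nzRingType) (J : A -> Prop) (a : A) : quot J :=
  exist _ (coset J a) (ex_intro _ a erefl).

Definition qrepr (A : nzRingType) (J : A -> Prop) (C : quot J) : A :=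
  proj1_sig (constructive_indefinite_description _ (proj2_sig C)).

Definition qone (A : nzRingType) (J : A -> Prop) : quot J := qclass J 1.
Definition qadd (A : nzRingType) (J : A -> Prop) (C D : quot J) : quot J :=
  qclass J (qrepr C + qrepr D).
Definition qmul (A : nzRingType) (J : A -> Prop) (C D : quot J) : quot J :=
  qclass J (qrepr C * qrepr D).

Definition ring_iso_quot (A : nzRingType) (J : A -> Prop) (f : A -> quot J) :
  Prop :=
  [/\ bijective f, f 1 = qone J,
      (forall x y, f (x + y) = qadd (f x) (f y)) &
      (forall x y, f (x * y) = qmul (f x) (f y))].

Definition hopfian (A : nzRingType) : Prop :=
  forall J : A -> Prop, ideal2 J -> (exists x, J x /\ x <> 0) ->
    ~ exists f : A -> quot J, ring_iso_quot f.

(* Main.v *)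
Require Import Defs.
From mathcomp Require Import all_boot all_order all_algebra.
From Stdlib Require Import ClassicalEpsilon FunctionalExtensionality PropExtensionality ProofIrrelevance.
Import GRing.Theory.
Local Open Scope ring_scope.

Section Q.
Variables (A : nzRingType) (J : A -> Prop).
Hypothesis HJ : ideal2 J.

Lemma qclass_eq a b : qclass J a = qclass J b <-> J (a - b).
Proof.
case: HJ => J0 Jsub Jl Jr; split.
- move=> /(f_equal (@proj1_sig _ _)) /= H.
  have : coset J a a by rewrite /coset subrr; exact: J0.
  by rewrite H.
- move=> Hab; apply: eq_sig_hprop => [x p q|]; first exact: proof_irrelevance.
  rewrite /=; apply: functional_extensionality => x; apply: propositional_extensionality.
  rewrite /coset; split => H.
  + have := Jsub _ _ H (Jsub _ _ J0 Hab).
    by rewrite sub0r opprK addrA addrNK.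
  + have := Jsub _ _ H Hab. by rewrite opprB addrA addrNK.
Qed.

Lemma qclass_repr C : qclass J (qrepr C) = C.
Proof.
apply: eq_sig_hprop => [x p q|]; first exact: proof_irrelevance.
rewrite /qrepr /=.
by case: (constructive_indefinite_description _ _) => r /= ->.
Qed.

Lemma qrepr_class a : J (qrepr (qclass J a) - a).
Proof. by apply/qclass_eq; rewrite qclass_repr. Qed.

Lemma qadd_class a b : qadd (qclass J a) (qclass J b) = qclass J (a + b).
Proof.
case: HJ => J0 Jsub Jl Jr.
apply/qclass_eq.
have := Jsub _ _ (qrepr_class a) (Jsub _ _ J0 (qrepr_class b)).
by rewrite sub0r opprK opprD addrACA addrC.
Qed.

Lemma qmul_class a b : qmul (qclass J a) (qclass J b) = qclass J (a * b).
Proof.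
case: HJ => J0 Jsub Jl Jr.
apply/qclass_eq.
set a' := qrepr _; set b' := qrepr _.
have E : a' * b' - a * b = a' * (b' - b) - (- ((a' - a) * b)).
  by rewrite opprK mulrBr mulrBl addrA addrNK.
rewrite E; apply: (Jsub); first exact: Jl (qrepr_class b).
by have := Jsub _ _ J0 (Jr b _ (qrepr_class a)); rewrite sub0r.
Qed.
End Q.

Theorem mainTheorem2 (A : nzRingType) :
  prime_ring A -> acc_prime A -> hopfian A.
Proof.
move=> Hpr Hacc J HJ [x0 [Jx0 x0n0]] [f [[g fK gK] f1 fD fM]].
pose phi a := g (qclass J a).
have phiD a b : phi (a + b) = phi a + phi b.
  by apply: (can_inj fK); rewrite /phi gK fD !gK qadd_class.
have phiM a b : phi (a * b) = phi a * phi b.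
  by apply: (can_inj fK); rewrite /phi gK fM !gK qmul_class.
have phi1 : phi 1 = 1 by rewrite /phi -[qclass J 1]/(qone J) -f1 fK.
have phi0 : phi 0 = 0.
  by apply: (@addrI _ (phi 0)); rewrite -phiD !addr0.
have phiB a b : phi (a - b) = phi a - phi b.
  by rewrite -[in RHS](subrK b a) (phiD (a - b) b) addrK.
have phiK a : phi a = 0 <-> J a.
  split=> H.
  - have : qclass J a = qclass J 0.
      by apply: (can_inj gK); rewrite -/(phi a) -/(phi 0) H phi0.
    by move/((@qclass_eq _ _ HJ)); rewrite subr0.
  - have : qclass J a = qclass J 0 by apply/((@qclass_eq _ _ HJ)); rewrite subr0.
    by rewrite /phi => ->; rewrite -/(phi 0) phi0.
have phiS y : exists z, phi z = y.
  by exists (qrepr (f y)); rewrite /phi qclass_repr fK.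
pose it n := iter n phi.
have itD n a b : it n (a + b) = it n a + it n b.
  by elim: n => //= n IH; rewrite IH phiD.
have itM n a b : it n (a * b) = it n a * it n b.
  by elim: n => //= n IH; rewrite IH phiM.
have itB n a b : it n (a - b) = it n a - it n b.
  by elim: n => //= n IH; rewrite IH phiB.
have it1 n : it n 1 = 1 by elim: n => //= n IH; rewrite IH phi1.
have it0 n : it n 0 = 0 by elim: n => //= n IH; rewrite IH phi0.
have itS n y : exists z, it n z = y.
  elim: n y => [|n IH] y; first by exists y.
  have [z Hz] := IH y; have [w Hw] := phiS z.
  by exists w; rewrite /it iterSr Hw.
pose P n a := it n a = 0.
have Pprime n : prime_ideal (P n).
  case: Hpr => _ _ Hp.
  split.
  - split; rewrite /P.
    + exact: it0.
    + by move=> a b Ha Hb; rewrite itB Ha Hb subr0.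
    + by move=> a b Hb; rewrite itM Hb mulr0.
    + by move=> a b Hb; rewrite itM Hb mul0r.
  - by rewrite /P it1; apply/eqP; exact: oner_neq0.
  - move=> a b H; apply: Hp => s.
    have [r <-] := itS n s.
    by rewrite -!itM; apply: H.
have Pmono n a : P n a -> P n.+1 a by rewrite /P /it /= => ->; rewrite phi0.
have [N HN] := Hacc P Pprime Pmono.
have [y Hy] := itS N x0.
have : P N.+1 y by rewrite /P /it /= -/(it N y) Hy; apply/phiK.
move/(HN N.+1 (leqnSn N)); rewrite /P Hy => H.
by apply: x0n0.
Qed.
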